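(* Let $(S,\Delta,\mathbb{P})$ be a probability space, $(U,d)$ a separable metric space, $\mathfrak{X}$ the set of $U$-valued random variables on $S$, $r\geq 0$, $\underline{X}=\{X_n\}_{n\in\mathbb{N}}$ a sequence in $\mathfrak{X}$, and $\mathcal{I}$ an analytic $P$-ideal on $\mathbb{N}$. Then the set $\mathcal{I}^{\mathbb{P}}\text{-}LIM^r\underline{X}$ is a Borel set of type $F_{\sigma\delta}$ in $(\mathfrak{X}^0,\rho)$.
   Context: The Ky Fan metric is $\rho(X,Y)=\inf\{\varepsilon>0:\mathbb{P}(d(X,Y)>\varepsilon)\leq\varepsilon\}$; $\mathfrak{X}^0$ is the set of equivalence classes of $\mathfrak{X}$ under almost sure equality, on which $\rho$ is a metric. A submeasure on $\mathbb{N}$ is $\varphi:\mathcal{P}(\mathbb{N})\to[0,\infty]$ with $\varphi(\varnothing)=0$, monotone, subadditive, and $\varphi(\{t\})<\infty$ for all $t$; it is lower semicontinuous if $\varphi(A)=\lim_{t\to\infty}\varphi(A\cap[1,t])$ for all $A$. An ideal $\mathcal{I}$ on $\mathbb{N}$ is an analytic $P$-ideal if $\mathcal{I}=Exh(\varphi)=\{A\subseteq\mathbb{N}:\lim_{t\to\infty}\varphi(A\setminus\{1,\dots,t\})=0\}$ for some lower semicontinuous submeasure $\varphi$. The set $\mathcal{I}^{\mathbb{P}}\text{-}LIM^r\underline{X}$ consists of all $X_*\in\mathfrak{X}$ with $\{n\in\mathbb{N}:\mathbb{P}(d(X_n,X_* )>r+\varepsilon)>\delta\}\in\mathcal{I}$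 for every $\varepsilon,\delta>0$ (regarded as a subset of $\mathfrak{X}^0$). An $F_{\sigma\delta}$ set is a countable intersection of countable unions of closed sets. *)

(* Defs.v *)
From HB Require Import structures.
From mathcomp Require Import all_boot all_order all_algebra.
From mathcomp Require Import all_classical all_reals all_analysis.
Set Implicit Arguments. Unset Strict Implicit. Unset Printing Implicit Defensive.
Import Order.TTheory GRing.Theory Num.Theory.
Local Open Scope classical_set_scope.
Local Open Scope ring_scope.

Section Defs.
Variable R : realType.

Definition is_metric (U : Type) (dist : U -> U -> R) : Prop :=
  (forall x y, 0 <= dist x y) /\
  (forall x y, dist x y = 0 <-> x = y) /\
  (forall x y, dist x y = dist y x) /\
  (forall x y z, dist x z <= dist x y + dist y z).

Definition separable_metric (U : Type) (dist : U -> U -> R) : Prop :=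
  exists D : set U, countable D /\
    forall x (e : R), 0 < e -> exists2 y, D y & dist x y < e.

Definition metric_open (U : Type) (dist : U -> U -> R) (A : set U) : Prop :=
  forall x, A x -> exists2 e : R, 0 < e & forall y, dist x y < e -> A y.

Definition is_rv d (S : measurableType d) (U : Type) (dist : U -> U -> R)
    (X : S -> U) : Prop :=
  forall B, <<s metric_open dist >> B -> measurable (X @^-1` B).

Definition kyfan d (S : measurableType d) (P : probability S R) (U : Type)
    (dist : U -> U -> R) (X Y : S -> U) : R :=
  inf [set e : R | 0 < e /\
       (P [set w | (e < dist (X w) (Y w))%R] <= e%:E)%E].

(** closed sets of the Ky Fan (pseudo)metric on the space of random
    variables (equivalently, preimages of closed subsets of the quotient
    space X^0 of a.s.-equivalence classes) *)
Definition kyfan_closed d (S : measurableType d) (P : probability S R)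
    (U : Type) (dist : U -> U -> R) (C : set (S -> U)) : Prop :=
  C `<=` is_rv dist /\
  forall X, is_rv dist X ->
    (forall e : R, 0 < e -> exists2 Y, C Y & kyfan P dist X Y < e) -> C X.

Definition kyfan_Fsigmadelta d (S : measurableType d) (P : probability S R)
    (U : Type) (dist : U -> U -> R) (A : set (S -> U)) : Prop :=
  exists F : nat -> nat -> set (S -> U),
    (forall i j, kyfan_closed P dist (F i j)) /\
    A = \bigcap_i \bigcup_j F i j.

Definition IP_LIM d (S : measurableType d) (P : probability S R)
    (U : Type) (dist : U -> U -> R) (I : set (set nat)) (r : R)
    (Xs : nat -> S -> U) : set (S -> U) :=
  [set Xs_ | is_rv dist Xs_ /\
     forall eps delta : R, 0 < eps -> 0 < delta ->
       I [set n | (delta%:E < P [set w | (r + eps < dist (Xs n w) (Xs_ w))%R])%E]].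
End Defs.

Definition submeasure {R : realType} (phi : set nat -> \bar R) : Prop :=
  phi set0 = 0%E /\
  (forall A, (0 <= phi A)%E) /\
  (forall A B, A `<=` B -> (phi A <= phi B)%E) /\
  (forall A B, (phi (A `|` B) <= phi A + phi B)%E) /\
  (forall t, (phi [set t] < +oo)%E).

Definition lsc_submeasure {R : realType} (phi : set nat -> \bar R) : Prop :=
  submeasure phi /\
  forall A, (fun t => phi (A `&` [set n | (n <= t)%N])) @ \oo --> phi A.

Definition Exh {R : realType} (phi : set nat -> \bar R) : set (set nat) :=
  [set A | (fun t => phi (A `\` [set n | (n <= t)%N])) @ \oo --> 0%E].

Definition is_ideal (I : set (set nat)) : Prop :=
  I set0 /\
  (forall A B, A `<=` B -> I B -> I A) /\
  (forall A B, I A -> I B -> I (A `|` B)) /\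
  ~ I setT.

Definition analytic_P_ideal (R : realType) (I : set (set nat)) : Prop :=
  is_ideal I /\ exists phi : set nat -> \bar R, lsc_submeasure phi /\ I = Exh phi.

(* Main.v *)
Require Import Defs.
From HB Require Import structures.
From mathcomp Require Import all_boot all_order all_algebra.
From mathcomp Require Import all_classical all_reals all_analysis.
From mathcomp Require Import lra.
Import Order.TTheory GRing.Theory Num.Theory.
Local Open Scope classical_set_scope.
Local Open Scope ring_scope.
Set Implicit Arguments. Unset Strict Implicit. Unset Printing Implicit Defensive.
Lemma open_lt (R : realType) (U : Type) (dist : U -> U -> R) (hmet : is_metric dist) z (c : R) :
  metric_open dist [set u | dist u z < c].
Proof.
case: hmet => h0 [h1 [hs ht]].
move=> x /= hx; exists (c - dist x z); first by rewrite subr_gt0.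
move=> y hy; have := ht y x z; have := hs y x; lra.
Qed.

Lemma open_gt (R : realType) (U : Type) (dist : U -> U -> R) (hmet : is_metric dist) z (c : R) :
  metric_open dist [set u | c < dist z u].
Proof.
case: hmet => h0 [h1 [hs ht]].
move=> x /= hx; exists (dist z x - c); first by rewrite subr_gt0.
move=> y hy; have := ht z y x; have := hs y x; lra.
Qed.

Lemma rv_open (R : realType) d (S : measurableType d) (U : Type) (dist : U -> U -> R) (X : S -> U) (B : set U) :
  is_rv dist X -> metric_open dist B -> measurable (X @^-1` B).
Proof. by move=> hX hB; apply: hX; apply: sub_sigma_algebra. Qed.
Lemma meas_dist (R : realType) d (S : measurableType d) (U : Type) (dist : U -> U -> R)
  (hmet : is_metric dist) (hsep : separable_metric dist) (X Y : S -> U)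
  (hX : is_rv dist X) (hY : is_rv dist Y) (a : R) :
  measurable [set w | a < dist (X w) (Y w)].
Proof.
have hmet' := hmet; case: hmet' => h0 [h1 [hs ht]].
case: hsep => D [/countable_injP [f finj] hD].
pose eta (k : nat) : R := k.+1%:R^-1.
have eta0 k : 0 < eta k by rewrite /eta invr_gt0 ltr0n.
pose H n k := [set w | exists z, [/\ D z, f z = n, dist (X w) z < eta k &
   a + eta k < dist z (Y w)]].
have -> : [set w | a < dist (X w) (Y w)] = \bigcup_n \bigcup_k H n k.
  apply/seteqP; split => w /=.
  - move=> hw.
    have [k hk] : exists k, 0 + k.+1%:R^-1 < (dist (X w) (Y w) - a) / 2.
      by apply: ltr_add_invr; lra.
    have [z Dz hz] := hD (X w) (eta k) (eta0 k).
    exists (f z) => //; exists k => //; exists z; split => //.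
    have := ht (X w) z (Y w); rewrite /eta in hz *; rewrite add0r in hk; set q := k.+1%:R^-1 in hk hz *; set D1 := dist (X w) (Y w) in hk *; lra.
  - move=> [n _ [k _ [z [Dz fz hz1 hz2]]]].
    have := ht z (X w) (Y w); have := hs z (X w); have := eta0 k; lra.
apply: bigcupT_measurable => n; apply: bigcupT_measurable => k.
case: (pselect (exists z, D z /\ f z = n)) => [[z0 [Dz0 fz0]]|nz].
- have -> : H n k = X @^-1` [set u | dist u z0 < eta k] `&`
     Y @^-1` [set u | a + eta k < dist z0 u].
    apply/seteqP; split => w /=.
    + move=> [z [Dz fz h1' h2']].
      have zz : z = z0 by apply: finj; rewrite ?inE // fz fz0.
      by subst z.
    + by move=> [h1' h2']; exists z0; split.
  apply: measurableI; [exact: (rv_open hX (@open_lt _ _ _ hmet _ _)) | exact: (rv_open hY (@open_gt _ _ _ hmet _ _))].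
- have -> : H n k = set0.
    apply/seteqP; split => w //= [z [Dz fz _ _]].
    by apply: nz; exists z.
  exact: measurable0.
Qed.
Lemma PE (R : realType) d (S : measurableType d) (P : probability S R) (A : set S) :
  measurable A -> exists p : R, P A = p%:E /\ 0 <= p /\ p <= 1.
Proof.
move=> mA; have h0 := measure_ge0 P A; have h1 := probability_le1 P mA.
have hf : P A \is a fin_num by rewrite ge0_fin_numE // (le_lt_trans h1) // ltey.
exists (fine (P A)); rewrite fineK //; split => //.
by rewrite -lee_fin -(lee_fin _ 1) fineK.
Qed.

Lemma kyfan_small (R : realType) d (S : measurableType d) (P : probability S R)
  (U : Type) (dist : U -> U -> R)
  (hmet : is_metric dist) (hsep : separable_metric dist) (X Y : S -> U)
  (hX : is_rv dist X) (hY : is_rv dist Y) (e : R) :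
  kyfan P dist X Y < e -> exists e', 0 < e' /\ e' < e /\
     (P [set w | (e' < dist (X w) (Y w))%R] <= e'%:E)%E.
Proof.
move=> /inf_lt [].
  exists 1; split => //; apply: probability_le1; exact: meas_dist.
by move=> e' [h1 h2] h3; exists e'.
Qed.
Lemma stable_gt (R : realType) d (S : measurableType d) (P : probability S R)
  (U : Type) (dist : U -> U -> R)
  (hmet : is_metric dist) (hsep : separable_metric dist) (Z X : S -> U)
  (hZ : is_rv dist Z) (hX : is_rv dist X) (a delta : R) :
  (delta%:E < P [set w | (a < dist (Z w) (X w))%R])%E ->
  exists2 e : R, 0 < e & forall Y, is_rv dist Y -> kyfan P dist X Y < e ->
     (delta%:E < P [set w | (a < dist (Z w) (Y w))%R])%E.
Proof.
have hmet' := hmet; case: hmet' => h0 [h1 [hs ht]].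
move=> hlt.
pose eta (k : nat) : R := k.+1%:R^-1.
have eta0 k : 0 < eta k by rewrite /eta invr_gt0 ltr0n.
pose Sj j := [set w | a + eta j < dist (Z w) (X w)].
have mSj j : measurable (Sj j) by exact: meas_dist.
have ndS : nondecreasing_seq Sj.
  move=> i j ij; apply/subsetPset => w; rewrite /Sj /=; apply: le_lt_trans.
  rewrite lerD2l /eta lef_pV2 ?posrE ?ltr0n // ler_nat; by [].
have bigS : \bigcup_n Sj n = [set w | (a < dist (Z w) (X w))%R].
  apply/seteqP; split => w /=.
  - by move=> [j _]; have := eta0 j; rewrite /Sj /=; lra.
  - move=> hw; have [k hk] := ltr_add_invr hw; by exists k.
have cv := nondecreasing_cvg_mu (mu := P) mSj (bigcup_measurable (fun k _ => mSj k)) ndS.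
rewrite -bigS in hlt.
have [j hj] : exists j, (delta%:E < P (Sj j))%E.
  apply: contrapT => hn.
  have : (P (\bigcup_n Sj n) <= delta%:E)%E.
    apply: (cvge_to_le cv); apply: nearW => j.
    by rewrite leNgt; apply/negP => hh; apply: hn; exists j.
  by rewrite leNgt hlt.
have [p [hp [p0 p1]]] := PE P (mSj j).
rewrite hp lte_fin in hj.
exists (Num.min (eta j / 2) (p - delta)).
  by rewrite lt_min; apply/andP; split; [have := eta0 j; lra | lra].
move=> Y hY /(kyfan_small hmet hsep hX hY) [e' [e'0 [e'e he']]].
move: e'e; rewrite lt_min => /andP[e'1 e'2].
set B1 := [set w | (a < dist (Z w) (Y w))%R].
set B2 := [set w | (e' < dist (X w) (Y w))%R].
have mB1 : measurable B1 by exact: meas_dist.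
have mB2 : measurable B2 by exact: meas_dist.
have sub : Sj j `<=` B1 `|` B2.
  move=> w; rewrite /Sj /B1 /B2 /= => hw.
  case: (boolP (a < dist (Z w) (Y w))) => hb; first by left.
  right; rewrite ltNge; apply/negP => hc.
  move: hb; rewrite -leNgt => hb.
  have := ht (Z w) (Y w) (X w); have := hs (Y w) (X w); have := eta0 j; lra.
have mU : measurable (B1 `|` B2) by exact: measurableU.
have := le_measure P (mem_set (mSj j)) (mem_set mU) sub.
move=> hle; have := le_trans hle (measureU2 P mB1 mB2).
have [q [hq _]] := PE P mB1.
have [q2 [hq2 _]] := PE P mB2.
move=> hpq0.
have : (p%:E <= q%:E + q2%:E)%E by rewrite -hp -hq -hq2; exact: hpq0.
rewrite -EFinD lee_fin => hpq.
move: he'; rewrite hq2 lee_fin => he'.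
rewrite hq lte_fin; lra.
Qed.
Lemma window (R : realType) d (S : measurableType d) (P : probability S R)
  (U : Type) (dist : U -> U -> R)
  (hmet : is_metric dist) (hsep : separable_metric dist) (Xs : nat -> S -> U)
  (hXs : forall n, is_rv dist (Xs n)) (X : S -> U) (hX : is_rv dist X) (a delta : R) (s : nat) :
  exists2 e : R, 0 < e & forall Y, is_rv dist Y -> kyfan P dist X Y < e ->
    forall n, (n <= s)%N ->
     (delta%:E < P [set w | (a < dist (Xs n w) (X w))%R])%E ->
     (delta%:E < P [set w | (a < dist (Xs n w) (Y w))%R])%E.
Proof.
elim: s => [|s [e1 e10 IH]].
- case: (pselect (delta%:E < P [set w | (a < dist (Xs 0 w) (X w))%R])%E) => h.
  + have [e e0 He] := stable_gt hmet hsep (hXs 0) hX h.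
    exists e => // Y hY hk n; rewrite leqn0 => /eqP -> _; exact: He.
  + exists 1 => // Y hY hk n; rewrite leqn0 => /eqP -> h'; by exfalso.
- case: (pselect (delta%:E < P [set w | (a < dist (Xs s.+1 w) (X w))%R])%E) => h.
  + have [e e0 He] := stable_gt hmet hsep (hXs s.+1) hX h.
    exists (Num.min e e1); first by rewrite lt_min e0 e10.
    move=> Y hY; rewrite lt_min => /andP[k1 k2] n; rewrite leq_eqVlt => /orP[/eqP ->|ns] hn.
    * exact: He.
    * exact: IH.
  + exists e1 => // Y hY k n; rewrite leq_eqVlt => /orP[/eqP ->|ns] hn.
    * by exfalso.
    * exact: IH.
Qed.
Unset Implicit Arguments.

Theorem theorem2p5 (R : realType) (d : measure_display) (S : measurableType d)
  (P : probability S R) (U : Type) (dist : U -> U -> R)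
  (hmet : is_metric dist) (hsep : separable_metric dist)
  (r : R) (hr : 0 <= r) (Xs : nat -> S -> U)
  (hXs : forall n, is_rv dist (Xs n))
  (I : set (set nat)) (hI : analytic_P_ideal R I) :
  kyfan_Fsigmadelta P dist (IP_LIM P dist I r Xs).
Proof.
case: hI => _ [phi [[[_ [phi0 [phimono _]]] lsc] hIE]].
pose c (i : nat) : R := i.+1%:R^-1.
have c0 i : 0 < c i by rewrite /c invr_gt0 ltr0n.
pose Ai (X : S -> U) i := [set n | ((c i)%:E < P [set w | (r + c i < dist (Xs n w) (X w))%R])%E].
pose F i t := [set X | is_rv dist X /\ (phi (Ai X i `\` [set n | (n <= t)%N]) <= (c i)%:E)%E].
exists F; split.
- move=> i t; split; first by move=> X [].
  move=> X hX hcl; split => //.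
  apply: (cvge_to_le (lsc _)); apply: nearW => s.
  have [e e0 He] := window P hmet hsep hXs hX (r + c i) (c i) s.
  have [Y [hY hYF] hk] := hcl e e0.
  apply: le_trans hYF; apply: phimono.
  move=> n [[hn1 hn2] hn3]; split => //.
  exact: (He Y hY hk n hn3 hn1).
- apply/seteqP; split.
  + move=> X [hX hall] i _.
    have := hall (c i) (c i) (c0 i) (c0 i); rewrite hIE /Exh /= => hcv.
    have [t ht] : exists t, (phi (Ai X i `\` [set n | (n <= t)%N]) <= (c i)%:E)%E.
      apply: contrapT => hn.
      have : ((c i)%:E <= 0)%E.
        apply: (cvge_to_ge hcv); apply: nearW => t.
        by apply/ltW; rewrite ltNge; apply/negP => hh; apply: hn; exists t.
      by rewrite lee_fin leNgt c0.
    by exists t.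
  + move=> X hX.
    have [t0 _ [hX0 _]] := hX 0%N Logic.I.
    split => // eps delta eps0 delta0.
    rewrite hIE /Exh /=.
    set A := [set n | _].
    have key : forall i, c i <= eps -> c i <= delta -> exists ti, forall t, (ti <= t)%N ->
        (0 <= phi (A `\` [set n | (n <= t)%N]) <= (c i)%:E)%E.
      move=> i ce cd; have [ti _ [_ hti]] := hX i Logic.I.
      exists ti => t hle; rewrite phi0 /=; apply: le_trans hti; apply: phimono.
      move=> n [hnA hnt]; split; last first.
        by move=> /= hn; apply: hnt => /=; apply: leq_trans hn hle.
      rewrite /Ai /=; apply: (le_lt_trans _ (lt_le_trans hnA _)); first by rewrite lee_fin.
      apply: le_measure; rewrite ?inE; try exact: meas_dist.
      by move=> w /=; apply: le_lt_trans; rewrite lerD2l.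
    have getc : forall x, 0 < x -> exists i, c i < x.
      by move=> x x0; have [k hk] := ltr_add_invr x0; exists k; rewrite add0r in hk.
    apply/fine_cvgP; split.
    + have [i hi] : exists i, c i < Num.min eps delta by apply: getc; rewrite lt_min eps0 delta0.
      move: hi; rewrite lt_min => /andP[h1 h2].
      have [ti Hti] := key i (ltW h1) (ltW h2).
      exists ti => // t /= /Hti /andP[u0 u1].
      by rewrite ge0_fin_numE // (le_lt_trans u1) // ltey.
    + apply/cvgrPdist_le => ep ep0.
      have [i hi] : exists i, c i < Num.min ep (Num.min eps delta) by apply: getc; rewrite !lt_min ep0 eps0 delta0.
      move: hi; rewrite !lt_min => /and3P[h0 h1 h2].
      have [ti Hti] := key i (ltW h1) (ltW h2).
      exists ti => // t /= /Hti /andP[u0 u1].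
      have hf : phi (A `\` [set n | (n <= t)%N]) \is a fin_num.
        by rewrite ge0_fin_numE // (le_lt_trans u1) // ltey.
      move: u0 u1; rewrite -(fineK hf) !lee_fin => u0 u1.
      rewrite sub0r normrN ger0_norm //; apply: le_trans u1 _; exact: ltW.
Qed.
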